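(* Let $G$ be a non-trivial connected graph, and let $k$ be a positive integer. Then $\dim_{k,f}(G)=1$ if and only if $G$ is isomorphic to the path $P_i$ for some $i\in\{2,3,\ldots,k+2\}$.
   Context: All graphs are finite, simple, undirected and connected; $P_i$ denotes the path on $i$ vertices. $d(x,y)$ is the length of a shortest $x$–$y$ path in $G$. For a positive integer $k$, $d_k(x,y)=\min\{d(x,y),k+1\}$ and $R_k\{x,y\}=\{z\in V(G): d_k(x,z)\neq d_k(y,z)\}$. For a function $g$ on $V(G)$ and $U\subseteq V(G)$, $g(U)=\sum_{s\in U}g(s)$. A function $h:V(G)\to[0,1]$ is a $k$-truncated resolving function of $G$ if $h(R_k\{x,y\})\ge 1$ for all distinct $x,y\in V(G)$. $\dim_{k,f}(G)=\min\{h(V(G)): h \text{ is a } k\text{-truncated resolving function of } G\}$. *)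

(* Defs.v *)
From HB Require Import structures.
From mathcomp Require Import all_boot all_order all_algebra.
From mathcomp Require Import reals.
Set Implicit Arguments. Unset Strict Implicit. Unset Printing Implicit Defensive.
Import Order.TTheory GRing.Theory Num.Theory.

Definition simple_graph (T : finType) (e : rel T) : Prop :=
  symmetric e /\ irreflexive e.
Definition connected_graph (T : finType) (e : rel T) : Prop :=
  forall x y : T, connect e x y.

Definition walkn (T : finType) (e : rel T) (n : nat) (x y : T) : bool :=
  [exists p : n.-tuple T, path e x p && (last x p == y)].

(* d(x,y): the least n with a walk of length n from x to y
   (for a connected graph this is < #|T|, so searching n in [0, #|T|) suffices) *)
Definition dist (T : finType) (e : rel T) (x y : T) : nat :=
  find (fun n => walkn e n x y) (iota 0 #|T|).

Definition dist_k (T : finType) (e : rel T) (k : nat) (x y : T) : nat :=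
  minn (dist e x y) k.+1.

Definition Rk (T : finType) (e : rel T) (k : nat) (x y : T) : {set T} :=
  [set z | dist_k e k x z != dist_k e k y z].

Definition k_trunc_resolving (R : realType) (T : finType) (e : rel T) (k : nat)
  (h : T -> R) : Prop :=
  (forall v, (0 <= h v)%R /\ (h v <= 1)%R) /\
  forall x y : T, x != y -> (1 <= \sum_(z in Rk e k x y) h z)%R.

Definition is_frac_trunc_dim (R : realType) (T : finType) (e : rel T) (k : nat)
  (r : R) : Prop :=
  (exists h : T -> R, k_trunc_resolving e k h /\ (\sum_(v : T) h v)%R = r) /\
  (forall h : T -> R, k_trunc_resolving e k h -> (r <= \sum_(v : T) h v)%R).

Definition path_rel (i : nat) : rel 'I_i :=
  fun a b => (a.+1 == b :> nat) || (b.+1 == a :> nat).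

Definition isomorphic_to_path (T : finType) (e : rel T) (i : nat) : Prop :=
  exists f : T -> 'I_i, bijective f /\ forall x y, e x y = path_rel (f x) (f y).

(* Main.v *)
Require Import Defs.
From HB Require Import structures.
From mathcomp Require Import all_boot all_order all_algebra.
From mathcomp Require Import reals.
From mathcomp Require Import lra zify.
Import Order.TTheory GRing.Theory Num.Theory.

Section Dist.
Local Set Implicit Arguments.
Local Unset Strict Implicit.
Variables (T : finType) (e : rel T).

Lemma walk_cons n x y z : e x y -> walkn e n y z -> walkn e n.+1 x z.
Proof.
move=> exy /existsP[t /andP[pt lt]]; apply/existsP; exists (cons_tuple y t).
by rewrite /= exy pt.
Qed.

Lemma walk_uncons n x z : walkn e n.+1 x z -> exists2 y, e x y & walkn e n y z.
Proof.
case/existsP=> -[[|y s] hs] //= /andP[/andP[exy ps] ls].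
exists y => //; apply/existsP; exists (@Tuple n T s hs); by rewrite /= ps.
Qed.

Lemma walk0 x z : walkn e 0 x z -> x = z.
Proof. by case/existsP=> -[[|y s] hs] //= /eqP. Qed.

Lemma dist_le n x y : n < #|T| -> walkn e n x y -> dist e x y <= n.
Proof.
move=> hn hw; rewrite leqNgt; apply/negP => lt.
have := before_find 0 lt; by rewrite nth_iota // add0n hw.
Qed.

Lemma dist_walk x y : connect e x y -> dist e x y < #|T| /\ walkn e (dist e x y) x y.
Proof.
case/connectP=> p pp ->; case/shortenP: pp => p' pp' up' _.
have hs : size p' < #|T|.
  by have := max_card (mem (x :: p')); rewrite (card_uniqP up').
have hw : walkn e (size p') x (last x p').
  by apply/existsP; exists (in_tuple p'); rewrite /= pp' eqxx.
have hd := dist_le hs hw.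
have hlt : dist e x (last x p') < #|T| by apply: leq_ltn_trans hs.
split => //.
have hh : has (fun n => walkn e n x (last x p')) (iota 0 #|T|).
  by rewrite has_find size_iota.
by have := nth_find 0 hh; rewrite nth_iota ?add0n.
Qed.

Hypothesis conn : connected_graph e.

Lemma dist_lt x y : dist e x y < #|T|.
Proof. by case: (dist_walk (conn x y)). Qed.

Lemma dist0 x y : dist e x y = 0 -> x = y.
Proof. by case: (dist_walk (conn x y)) => _ hw h; rewrite h in hw; apply: walk0. Qed.

Lemma dist_refl x : dist e x x = 0.
Proof.
apply/eqP; rewrite -leqn0; apply: dist_le.
  by apply/card_gt0P; exists x.
by apply/existsP; exists [tuple]; rewrite /=.
Qed.

Lemma dist_pred x z d : dist e x z = d.+1 -> exists2 y, e x y & dist e y z <= d.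
Proof.
move=> h; case: (dist_walk (conn x z)); rewrite h => hl /walk_uncons[y exy hw].
by exists y => //; apply: dist_le => //; apply: ltnW.
Qed.

Lemma dist_edge x y z : e x y -> dist e x z <= (dist e y z).+1.
Proof.
move=> exy; case: (dist_walk (conn y z)) => hl hw.
case: (ltnP (dist e y z).+1 #|T|) => h.
  by apply: dist_le => //; apply: walk_cons hw.
rewrite /dist; apply: leq_trans h; by rewrite -{2}(size_iota 0 #|T|) find_size.
Qed.

Lemma dist_lower (z : T) (phi : T -> nat) :
  phi z = 0 -> (forall a b, e a b -> phi a <= (phi b).+1) ->
  forall x, phi x <= dist e x z.
Proof.
move=> hz he x; move: {2}(dist e x z) (leqnn (dist e x z)) => m.
elim: m x => [|m IH] x hm.
  by move: hm; rewrite leqn0 => /eqP/dist0 ->; rewrite hz.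
case hd: (dist e x z) => [|d].
  by move/dist0: hd => ->; rewrite hz.
case: (dist_pred hd) => y exy hy.
have := IH y (leq_trans hy _); rewrite hd in hm.
move=> /(_ hm) hy2; apply: leq_trans (he _ _ exy) _; by rewrite ltnS (leq_trans hy2).
Qed.

Lemma dist_upper (z : T) (phi : T -> nat) :
  (forall x, phi x = 0 -> x = z) ->
  (forall x, 0 < phi x -> exists2 y, e x y & phi y = (phi x).-1) ->
  forall x, dist e x z <= phi x.
Proof.
move=> h0 hs x; move: {2}(phi x) (erefl (phi x)) => n.
elim: n x => [|n IH] x hx.
  by rewrite (h0 _ hx) dist_refl.
have hp : 0 < phi x by rewrite hx.
have [y exy hy] := hs x hp.
rewrite hx /= in hy.
apply: leq_trans (dist_edge z exy) _.
by rewrite hx ltnS -hy; apply: IH.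
Qed.

End Dist.

Lemma sum_sub_le (R : realType) (T : finType) (A : {pred T}) (h : T -> R) :
  (forall v, 0 <= h v)%R -> (\sum_(v in A) h v <= \sum_v h v)%R.
Proof.
move=> h0; rewrite [X in (_ <= X)%R](bigID (mem A)) /= lerDl.
by apply: sumr_ge0.
Qed.

Theorem theorem2p7 (R : realType) (T : finType) (e : rel T) (k : nat) :
  simple_graph e -> connected_graph e -> 1 < #|T| -> 0 < k ->
  is_frac_trunc_dim e k (1 : R) <->
  exists i : nat, 2 <= i <= k.+2 /\ isomorphic_to_path e i.
Proof.
move=> [esy eirr] conn hT hk; split.
- case=> -[h [[h01 hres] hsum]] _.
  have [z hz] : exists z, (0 < h z)%R.
    case: (pickP (fun v => 0 < h v)%R) => [z hz|none]; first by exists z.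
    have : (\sum_v h v = 0)%R.
      apply: big1 => v _; have [h0 _] := h01 v; move: (none v) => /= hn.
      by apply/eqP; rewrite eq_le h0 andbT leNgt hn.
    by rewrite hsum => /eqP; rewrite oner_eq0.
  have hzR : forall x y, x != y -> z \in Rk e k x y.
    move=> x y hxy; apply/contraT => hn.
    have := hres x y hxy.
    rewrite (bigID (mem (Rk e k x y))) /= in hsum.
    rewrite [X in (_ + X)%R](bigD1 z) //= in hsum.
    set rest := (\sum_(i | _ && _) h i)%R in hsum.
    have : (0 <= rest)%R by apply: sumr_ge0 => i _; case: (h01 i).
    move=> *; exfalso; lra.
  have hinj : forall x y, dist_k e k x z = dist_k e k y z -> x = y.
    move=> x y hxy; apply/eqP/negP => /negP hn; move: (hzR _ _ hn).
    by rewrite inE hxy eqxx.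
  pose phi x := dist e x z.
  have phil : forall x, phi x < #|T| := fun x => dist_lt conn x z.
  have phinj : injective phi.
    by move=> x y hxy; apply: hinj; move: hxy; rewrite /dist_k /phi => ->.
  exists #|T|; split.
    apply/andP; split; first exact hT.
    pose g x : 'I_k.+2 := Ordinal (geq_minr (dist e x z) k.+1 : dist_k e k x z < k.+2).
    have gi : injective g by move=> x y /(congr1 val) /= /hinj.
    by have := leq_card g gi; rewrite card_ord.
  pose f x : 'I_#|T| := Ordinal (phil x).
  exists f; split.
    apply: inj_card_bij; first by move=> x y /(congr1 val) /= /phinj.
    by rewrite card_ord.
  move=> x y; rewrite /path_rel /=.
  apply/idP/idP.
  + move=> exy.
    have h1 := dist_edge conn z exy.
    have h2 := dist_edge conn z (etrans (esy y x) exy).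
    have hne : phi x != phi y.
      by apply/eqP => /phinj hxy; rewrite hxy eirr in exy.
    rewrite /phi; apply/orP.
    have [hlt|hlt|heq] := ltngtP (dist e x z) (dist e y z).
    * by left; apply/eqP; lia.
    * by right; apply/eqP; lia.
    * by move: hne; rewrite /phi heq eqxx.
  + case/orP => /eqP hh; rewrite /phi in hh.
    * have [w eyw hw] := dist_pred conn (esym hh).
      have := dist_edge conn z eyw; rewrite -hh ltnS => hw2.
      have hwx : w = x by apply: phinj; apply/eqP; rewrite /phi eqn_leq hw hw2.
      by rewrite esy -hwx.
    * have [w exw hw] := dist_pred conn (esym hh).
      have := dist_edge conn z exw; rewrite -hh ltnS => hw2.
      have hwx : w = y by apply: phinj; apply/eqP; rewrite /phi eqn_leq hw hw2.
      by rewrite -hwx.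
- case=> i [/andP[hi2 hik] [f [fbij hf]]].
  have cardT : #|T| = i by rewrite (bij_eq_card fbij) card_ord.
  move: f fbij hf cardT; case: i hi2 hik => [//|i] hi2 hik f fbij hf cardT.
  case: fbij => g fg gf.
  pose z := g ord0.
  pose phi x := nat_of_ord (f x).
  have hz : phi z = 0 by rewrite /phi /z gf.
  have hdist : forall x, dist e x z = phi x.
    move=> x; apply/eqP; rewrite eqn_leq; apply/andP; split.
      apply: (dist_upper conn) => [y hy | y hy].
        by rewrite /z -(fg y); congr g; apply/val_inj.
      have hl : (phi y).-1 < i.+1 by have := ltn_ord (f y); rewrite /phi; lia.
      exists (g (inord (phi y).-1)).
        rewrite hf gf /path_rel inordK //; apply/orP; right; apply/eqP.
        rewrite /phi in hy *; lia.
      by rewrite /phi gf inordK.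
    apply: (dist_lower conn hz) => a b; rewrite hf /path_rel => /orP[] /eqP; rewrite /phi; lia.
  have hmin : forall x, minn (phi x) k.+1 = phi x.
    by move=> w; apply/minn_idPl; have := ltn_ord (f w); rewrite /phi; lia.
  split.
    exists (fun v => if v == z then 1 else 0)%R; split; [split|].
      by move=> v; case: (v == z) => /=; rewrite ?ler01 ?lexx.
      move=> x y hxy; rewrite (bigD1 z) /=; last first.
        rewrite inE /dist_k !hdist !hmin; apply/eqP => /val_inj /(can_inj fg) hxy2.
        by rewrite hxy2 eqxx in hxy.
      by rewrite eqxx big1 ?addr0 // => v /andP[_ /negbTE ->].
    by rewrite (bigD1 z) //= eqxx big1 ?addr0 // => v /negbTE ->.
  move=> h [h01 hres]; case/card_gt1P: hT => x [y [_ _ hxy]].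
  apply: (le_trans (hres x y hxy)); apply: sum_sub_le => v; by case: (h01 v).
Qed.
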